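(* Let $L$ be a connected $(\kappa,\ell)$-linkoid diagram, regarded as a generalized knotoid diagram. Then $\Omega_g(L)=\kappa-2$ if $L$ is spherical (in $S^2$), and $\Omega_g(L)=\kappa-1$ if $L$ is planar (in $\mathbb{R}^2$).
   Context: A $(\kappa,\ell)$-linkoid diagram is an immersion of $\kappa$ oriented intervals and $\ell$ oriented circles into a surface ($S^2$ for spherical, $\mathbb{R}^2$ for planar) whose only singularities are transverse double points (crossings) away from the interval endpoints, with over/under information. It is connected if the graph with crossings as degree-4 vertices and endpoints as degree-1 vertices is connected. As a generalized knotoid diagram on $S^2$, the endpoints are degree-1 nodes; a planar diagram is viewed in $S^2=\mathbb{R}^2\cup\{\infty\}$ with an additional degree-zero node at $\infty$. A region (complement component in $S^2$) counts as a disk region iff it contains no degree-zero node. With $n$ the number of crossings and $f_d$ the number of disk regions, $\Omega_g(L)=n-f_d$. *)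

(* Defs.v *)
From mathcomp Require Import all_boot all_order all_algebra.
Set Implicit Arguments. Unset Strict Implicit. Unset Printing Implicit Defensive.
Import GRing.Theory Num.Theory.

(* A map of a linkoid diagram graph: darts (half-edges), the fixed-point-free
   involution [edge] pairing the two darts of an edge, and the permutation
   [node] rotating the darts around their vertex (cyclic order given by the
   embedding in the oriented surface).  Vertices = [node]-orbits, faces
   (regions) = orbits of [face := node \o edge].  In a linkoid diagram every
   node is a crossing (degree 4, strands go straight through opposite darts)
   or an interval endpoint (degree 1). *)
Record linkoid_map := LinkoidMap {
  dart : finType;
  edge : dart -> dart;
  node : dart -> dart;
  edgeK : involutive edge;
  edge_nofix : forall x, edge x != x;
  node_inj : injective node;
  node_deg : forall x, (order node x == 1) || (order node x == 4)
}.

Section Counts.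
Variable M : linkoid_map.

Definition face (x : dart M) : dart M := @node M (@edge M x).

Definition num_vertices : nat := #|[set x : dart M | froot (@node M) x == x]|.
Definition num_edges : nat := #|dart M| %/ 2.
Definition num_faces : nat := #|[set x : dart M | froot face x == x]|.

Definition num_crossings : nat :=
  #|[set x : dart M | (froot (@node M) x == x) && (order (@node M) x == 4)]|.

(* interval endpoints = degree-1 nodes; each of the kappa intervals has two *)
Definition num_endpoints : nat := #|[set x : dart M | @node M x == x]|.
Definition kappa : nat := num_endpoints %/ 2.

Definition connected_diagram : Prop :=
  forall x y : dart M,
    connect (fun a b => (b == @edge M a) || (b == @node M a)) x y.

(* the map is embedded in S^2: genus 0, i.e. Euler characteristic 2 *)
Definition spherical : Prop := (num_vertices + num_faces = num_edges + 2)%N.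

(* Spherical diagram: no degree-zero node, every region is a disk. *)
Definition Omega_sphere : int := (num_crossings%:Z - num_faces%:Z)%R.

(* Planar diagram: S^2 = R^2 u {oo}, with the degree-zero node oo lying in
   the region (face) containing the dart [inf]; that region is not a disk. *)
Definition num_disk_faces_plane (inf : dart M) : nat :=
  #|[set x : dart M | (froot face x == x) && ~~ fconnect face inf x]|.
Definition Omega_plane (inf : dart M) : int :=
  (num_crossings%:Z - (num_disk_faces_plane inf)%:Z)%R.

End Counts.

(* Main.v *)
Require Import Defs.
From mathcomp Require Import all_boot all_order all_algebra.
From mathcomp Require Import zify.
Set Implicit Arguments. Unset Strict Implicit. Unset Printing Implicit Defensive.

Section Aux.
Variable T : finType.
Variable f : T -> T.
Hypothesis finj : injective f.

Lemma fconn_iterP x y : fconnect f x y -> exists n, y = iter n f x.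
Proof. by move=> /iter_findex <-; eexists. Qed.

Lemma order_f x : order f (f x) = order f x.
Proof.
rewrite /order; apply: eq_card => y.
symmetry; exact: (same_connect1 (fconnect_sym finj) (eqxx (f x)) y).
Qed.

Lemma fclosed_order n : fclosed f (order_set f n).
Proof. by move=> x y /eqP <-; rewrite !inE order_f. Qed.

Lemma order1_fix x : (order f x == 1) = (f x == x).
Proof.
apply/idP/idP.
  move=> /eqP o1; apply/eqP.
  have := iter_order finj x; by rewrite o1.
move=> /eqP fx; apply/eqP; rewrite /order -(card1 x); apply: eq_card => y.
rewrite inE; change (fconnect f x y = (y == x)).
apply/idP/idP.
  by move=> /fconn_iterP [n ->]; rewrite iter_fix.
by move=> /eqP ->; apply: connect0.
Qed.
End Aux.

Section Main.
Variable M : linkoid_map.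

Local Notation D := (dart M).
Local Notation nd := (@node M).
Local Notation ed := (@edge M).

Lemma edge_inj : injective ed.
Proof. exact: (inv_inj (@edgeK M)). Qed.

Lemma face_inj : injective (@face M).
Proof. by move=> x y /(@node_inj M) /edge_inj. Qed.

Lemma order_edge (x : D) : order ed x = 2.
Proof.
rewrite /order.
have -> : #|fconnect ed x| = #|pred2 x (ed x)|.
  apply: eq_card => y; rewrite inE; change (fconnect ed x y = (y == x) || (y == ed x)).
  apply/idP/idP.
    move=> /fconn_iterP [n ->]; elim: n => [|n IH]; first by rewrite eqxx.
    rewrite iterS; case/orP: IH => /eqP ->.
      by rewrite eqxx orbT.
    by rewrite (@edgeK M) eqxx.
  by case/orP => /eqP ->; [apply: connect0 | apply: (fconnect_iter ed 1)].
by rewrite card2 eq_sym (@edge_nofix M).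
Qed.

Lemma card_even : #|D| = 2 * (#|D| %/ 2).
Proof.
have := @fcard_order_set D ed edge_inj 2 D.
rewrite (_ : #|D| = #|mem D|) //.
move=> H; rewrite -H.
- by rewrite mulnC mulKn.
- by apply/subsetP => x _; rewrite inE order_edge.
- by move=> x y _.
Qed.

Lemma counts :
  #|D| = 4 * num_crossings M + num_endpoints M /\
      num_vertices M = num_crossings M + num_endpoints M.
Proof.
pose a4 := order_set nd 4.
pose a1 := order_set nd 1.
have ninj : injective nd by exact: (@node_inj M).
have H4 := @fcard_order_set D nd ninj 4 a4 (subxx _) (fclosed_order ninj 4).
have H1 := @fcard_order_set D nd ninj 1 a1 (subxx _) (fclosed_order ninj 1).
rewrite muln1 in H1.
have Ec : num_crossings M = fcard nd a4.
  by rewrite /num_crossings /n_comp_mem; apply: eq_card => x; rewrite !inE.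
have Ee : num_endpoints M = #|a1|.
  by rewrite /num_endpoints; apply: eq_card => x; rewrite !inE order1_fix.
have deg x : (x \in a1) = ~~ (x \in a4).
  rewrite !inE; case/orP: (@node_deg M x) => /eqP -> //.
have ED : #|D| = #|a4| + #|a1|.
  by rewrite -(cardID a4 D); congr (_ + _); apply: eq_card => x;
    rewrite !inE; case/orP: (@node_deg M x) => /eqP -> .
split; first by rewrite ED -H4 Ec Ee mulnC.
rewrite Ec Ee -H1 /num_vertices /n_comp_mem.
by rewrite -(cardID a4); congr (_ + _); apply: eq_card => x;
    rewrite !inE; case/orP: (@node_deg M x) => /eqP -> ; rewrite ?andbT ?andbF.
Qed.

Lemma plane_faces (inf : D) : (num_disk_faces_plane inf).+1 = num_faces M.
Proof.
have sym := fconnect_sym face_inj.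
rewrite /num_faces -(cardID (fconnect (@face M) inf)) /num_disk_faces_plane.
rewrite -add1n; congr (_ + _); last by apply: eq_card => x; rewrite !inE andbC.
transitivity #|pred1 (froot (@face M) inf)|; first by rewrite card1.
apply: eq_card => x; rewrite !inE.
apply/idP/idP.
  move/eqP ->; rewrite (root_root sym) eqxx /=; exact: connect_root.
case/andP => /eqP rx cx; rewrite -rx; apply/eqP.
by symmetry; apply/(fingraph.rootP sym).
Qed.

End Main.

Theorem proposition3p23 (M : linkoid_map) :
  spherical M -> connected_diagram M ->
  (Omega_sphere M = ((kappa M)%:Z - 2)%R) /\
  (forall inf : dart M, Omega_plane inf = ((kappa M)%:Z - 1)%R).
Proof.
move=> sph _.
have [ED EV] := counts M.
have Ev := card_even M.
rewrite /spherical /num_edges EV in sph.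
rewrite /Omega_sphere /Omega_plane /kappa.
move: sph Ev; rewrite ED.
set c := num_crossings M; set e := num_endpoints M; set F := num_faces M.
move=> sph Ev; split.
  lia.
move=> inf; have := plane_faces inf; rewrite -/F => PF; lia.
Qed.
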